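(* Let $0<m\le L$ and let the two-step momentum algorithm with constant parameters $(\alpha,\beta,\gamma)$ minimize some function $f\in\mathcal{Q}_m^L$ with linear rate $\rho<1$ (i.e. the spectral radius of the matrix $A$ associated with this $f$ is at most $\rho$). Then the convergence rate $\rho$ is achieved for all functions $f\in\mathcal{Q}_m^L$.
   Context: $\mathcal{Q}_m^L$ is the class of quadratic functions $f(x)=\tfrac12x^TQx-q^Tx$ on $\mathbb{R}^n$ with $q\in\mathbb{R}^n$, $Q=Q^T\succ0$ whose largest eigenvalue is $L$ and smallest is $m$; $x^\star$ is the minimizer. The (noiseless) two-step momentum algorithm is $x^{t+2}=x^{t+1}+\beta(x^{t+1}-x^t)-\alpha\nabla f\big(x^{t+1}+\gamma(x^{t+1}-x^t)\big)$; with $\psi^t=[(x^t-x^\star)^T,(x^{t+1}-x^\star)^T]^T$, $\psi^{t+1}=A\psi^t$, $A=\begin{bmatrix}0&I\\-\beta I+\gamma\alpha Q&(1+\beta)I-(1+\gamma)\alpha Q\end{bmatrix}$. Rate $\rho$ is achieved for $f$ when the spectral radius of the corresponding $A$ is at most $\rho$. *)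

(* Defs.v *)
From HB Require Import structures.
From mathcomp Require Import all_boot all_order all_algebra.
From mathcomp Require Import reals.
From mathcomp Require Import complex.
Set Implicit Arguments. Unset Strict Implicit. Unset Printing Implicit Defensive.
Import Order.TTheory GRing.Theory Num.Theory.
Local Open Scope ring_scope.
Local Open Scope complex_scope.

(* f(x) = 1/2 x^T Q x - q^T x belongs to Q_m^L : Q symmetric positive definite,
   largest eigenvalue L, smallest eigenvalue m. *)
Definition in_QmL (R : realType) (n : nat) (m L : R)
    (Q : 'M[R]_n) (q : 'cV[R]_n) : Prop :=
  [/\ Q^T = Q,
      (forall x : 'cV[R]_n, x != 0 -> 0 < ((x^T *m Q *m x) 0 0)),
      eigenvalue Q L /\ (forall l, eigenvalue Q l -> l <= L) &
      eigenvalue Q m /\ (forall l, eigenvalue Q l -> m <= l)].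

Definition momentum_matrix (R : realType) (n : nat) (alpha beta gamma : R)
    (Q : 'M[R]_n) : 'M[R]_(n + n) :=
  block_mx 0 1%:M
           ((- beta)%:M + (gamma * alpha) *: Q)
           ((1 + beta)%:M - ((1 + gamma) * alpha) *: Q).

Definition spectral_radius_le (R : realType) (k : nat) (A : 'M[R]_k) (rho : R)
  : Prop :=
  forall z : R[i], eigenvalue (map_mx (fun x : R => x%:C) A) z ->
    `|z| <= rho%:C.

Definition achieves_rate (R : realType) (n : nat) (alpha beta gamma : R)
    (Q : 'M[R]_n) (q : 'cV[R]_n) (rho : R) : Prop :=
  spectral_radius_le (momentum_matrix alpha beta gamma Q) rho.

(* Main.v *)
Require Import Defs.
From HB Require Import structures.
From mathcomp Require Import all_boot all_order all_algebra.
From mathcomp Require Import reals complex ring lra.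
Import Order.TTheory GRing.Theory Num.Theory.
Local Open Scope ring_scope.
Local Open Scope complex_scope.
Section S.
Variable R : realType.
Definition pc (b c : R) (z : R[i]) := z ^+ 2 - b%:C * z + c%:C.
Lemma pc_eqs b c x y : pc b c (x +i* y) = 0 ->
  x^+2 - y^+2 - b * x + c = 0 /\ 2 * x * y - b * y = 0.
Proof.
move=> H. have H1 := congr1 (@complex.Re R) H. have H2 := congr1 (@complex.Im R) H.
move: H1 H2; rewrite /pc /= => H1 H2.
split.
- rewrite -H1. ring.
- rewrite -H2. ring.
Qed.
Lemma normle (x y rho : R) :
  `|x +i* y| <= rho%:C <-> 0 <= rho /\ x ^+ 2 + y ^+ 2 <= rho ^+ 2.
Proof.
rewrite normc_def lecR /=.
have [hr|hr] := leP 0 rho.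
- rewrite -(ler_sqrt _ (sqr_ge0 rho)) sqrtr_sqr ger0_norm //.
  split; [by move=> ->|by case].
- split; last by case=> h; lra.
  move=> h; have := sqrtr_ge0 (x ^+ 2 + y ^+ 2). lra.
Qed.
Definition good (rho b c : R) :=
  [/\ c <= rho ^+ 2, b <= 2 * rho, - b <= 2 * rho,
      0 <= rho ^+ 2 - b * rho + c & 0 <= rho ^+ 2 + b * rho + c].
Lemma goodB rho b c z : good rho b c -> pc b c z = 0 -> `|z| <= rho%:C.
Proof.
case: z => x y [h1 h2 h3 h4 h5] /pc_eqs [e1 e2].
apply/normle; split; first lra.
have [y0|ny0] := eqVneq y 0.
- subst y. rewrite expr0n /= addr0.
  have hx : - rho <= x <= rho.
    apply/andP; split.
    + rewrite leNgt; apply/negP => hlt.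
      (* other root b - x > -rho *)
      nra.
    + rewrite leNgt; apply/negP => hlt. nra.
  nra.
- have hxb : x = b / 2.
    have : (2 * x - b) * y = 0 by rewrite -e2; ring.
    move/eqP; rewrite mulf_eq0 (negbTE ny0) orbF subr_eq0 => /eqP <-.
    by field.
  rewrite hxb in e1 *. nra.
Qed.
Lemma pc_expand b c x y : pc b c (x +i* y) =
  (x ^+ 2 - y ^+ 2 - b * x + c) +i* (2 * x * y - b * y).
Proof. by rewrite /pc /=; congr Complex; ring. Qed.
Lemma goodA rho b c : (forall z, pc b c z = 0 -> `|z| <= rho%:C) -> good rho b c.
Proof.
move=> H.
have [hD|hD] := leP 0 (b ^+ 2 - 4 * c).
- set s := Num.sqrt (b ^+ 2 - 4 * c).
  have hs : s ^+ 2 = b ^+ 2 - 4 * c by rewrite sqr_sqrtr.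
  have hs0 : 0 <= s by apply: sqrtr_ge0.
  have /normle [hr1 hr1'] : `|((b + s) / 2) +i* 0| <= rho%:C.
    apply: H; rewrite pc_expand; congr Complex; last by ring.
    have -> : ((b+s)/2)^+2 - 0^+2 - b*((b+s)/2) + c = (s^+2 - (b^+2 - 4*c))/4 by field.
    by rewrite hs subrr mul0r.
  have /normle [_ hr2'] : `|((b - s) / 2) +i* 0| <= rho%:C.
    apply: H; rewrite pc_expand; congr Complex; last by ring.
    have -> : ((b-s)/2)^+2 - 0^+2 - b*((b-s)/2) + c = (s^+2 - (b^+2 - 4*c))/4 by field.
    by rewrite hs subrr mul0r.
  move: hr1' hr2'; rewrite expr0n /= !addr0.
  set r1 := (b + s) / 2; set r2 := (b - s) / 2 => h1 h2.
  have eb : b = r1 + r2 by rewrite /r1 /r2; field.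
  have ec : c = r1 * r2.
    have -> : r1 * r2 = (b ^+ 2 - s ^+ 2) / 4 by rewrite /r1 /r2; field.
    by rewrite hs; field.
  have b1 : - rho <= r1 <= rho by apply/andP; split; nra.
  have b2 : - rho <= r2 <= rho by apply/andP; split; nra.
  move: b1 b2 => /andP [b1 b1'] /andP [b2 b2'].
  rewrite /good eb ec; split; nra.
- set s := Num.sqrt (- (b ^+ 2 - 4 * c)).
  have hs : s ^+ 2 = - (b ^+ 2 - 4 * c) by rewrite sqr_sqrtr // oppr_ge0 ltW.
  have /normle [hr1 hr1'] : `|(b / 2) +i* (s / 2)| <= rho%:C.
    apply: H; rewrite pc_expand; congr Complex; last by field.
    have -> : (b/2)^+2 - (s/2)^+2 - b*(b/2) + c = - (s^+2 + (b^+2 - 4*c))/4 by field.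
    by rewrite hs addNr oppr0 mul0r.
  have hc : c * 4 = b ^+ 2 + s ^+ 2 by rewrite hs; ring.
  have hc' : c <= rho ^+ 2.
    have -> : c = (b / 2) ^+ 2 + (s / 2) ^+ 2 by nra.
    exact: hr1'.
  rewrite /good; split; nra.
Qed.
Lemma aff (p q m L x : R) : m <= x -> x <= L -> 0 <= p + q * m -> 0 <= p + q * L -> 0 <= p + q * x.
Proof. move=> h1 h2 h3 h4; have [hq|hq] := leP 0 q; nra. Qed.
Definition bb (alpha beta gamma l : R) := 1 + beta - (1 + gamma) * alpha * l.
Definition cc (alpha beta gamma l : R) := beta - gamma * alpha * l.
Lemma good_conv rho alpha beta gamma m L l : m <= l -> l <= L ->
  good rho (bb alpha beta gamma m) (cc alpha beta gamma m) ->
  good rho (bb alpha beta gamma L) (cc alpha beta gamma L) ->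
  good rho (bb alpha beta gamma l) (cc alpha beta gamma l).
Proof.
rewrite /good /bb /cc => h1 h2 [a1 a2 a3 a4 a5] [b1 b2 b3 b4 b5]; split.
- have := @aff (rho^+2 - beta) (gamma * alpha) _ _ _ h1 h2. lra.
- have := @aff (2 * rho - (1 + beta)) ((1 + gamma) * alpha) _ _ _ h1 h2. lra.
- have := @aff (2 * rho + (1 + beta)) (- ((1 + gamma) * alpha)) _ _ _ h1 h2. lra.
- have := @aff (rho^+2 - (1 + beta) * rho + beta) ((1 + gamma) * alpha * rho - gamma * alpha) _ _ _ h1 h2. lra.
- have := @aff (rho^+2 + (1 + beta) * rho + beta) (- ((1 + gamma) * alpha * rho) - gamma * alpha) _ _ _ h1 h2. lra.
Qed.
End S.
Arguments bb {R}. Arguments cc {R}. Arguments pc {R}. Arguments good {R}.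
Arguments goodA {R}. Arguments goodB {R}. Arguments good_conv {R}.

Section M.
Variable R : realType.
Local Notation f := (real_complex R).
Variables (n : nat) (alpha beta gamma : R) (Q : 'M[R]_n).
Local Notation Qc := (@map_mx R R[i] f n n Q).

Lemma Ac_block : map_mx (fun x : R => x%:C) (momentum_matrix alpha beta gamma Q) =
  block_mx 0 1%:M ((- beta%:C)%:M + (gamma*alpha)%:C *: Qc)
     ((1 + beta%:C)%:M - ((1+gamma)*alpha)%:C *: Qc).
Proof.
rewrite /momentum_matrix.
change (@map_mx R R[i] (fun x : R => x%:C) (n + n) (n + n)) with (@map_mx R R[i] f (n + n) (n + n)).
by rewrite map_block_mx map_mx0 map_mx1 map_mxD map_mxB !map_scalar_mx !map_mxZ
  rmorphN rmorphD rmorph1.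
Qed.

Lemma eig_split z : eigenvalue (map_mx (fun x : R => x%:C) (momentum_matrix alpha beta gamma Q)) z ->
  exists2 v : 'rV[R[i]]_n, v != 0 & forall j,
   (alpha%:C * (gamma%:C - (1 + gamma%:C) * z)) * (v *m Qc) 0 j
     = (z ^+ 2 - (1 + beta%:C) * z + beta%:C) * v 0 j.
Proof.
move/eigenvalueP => [w hw wn0].
rewrite Ac_block -[w]hsubmxK mul_row_block scale_row_mx in hw.
move/eq_row_mx: hw => [E1 E2].
rewrite !mulmx0 mulmx1 add0r in E1 E2.
rewrite -[w]hsubmxK in wn0.
move: (lsubmx w) (rsubmx w) E1 E2 wn0 => u v E1 E2 wn0.
rewrite mulmxDr mulmxBr !mul_mx_scalar -!scalemxAr in E1 E2.
exists v.
- apply: contraNneq wn0 => v0.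
  rewrite v0 !mul0mx ?scaler0 ?subr0 ?addr0 in E2.
  by rewrite E2 v0 row_mx0.
- move=> j.
  have e1 := congr1 (fun M : 'rV[R[i]]_n => M 0 j) E1; have e2 := congr1 (fun M : 'rV[R[i]]_n => M 0 j) E2.
  move: e1 e2; set q := v *m Qc => e1 e2; clearbody q; rewrite /= !mxE in e1 e2.
  have h : (alpha%:C * (gamma%:C - (1 + gamma%:C) * z)) * q 0 j
     - (z ^+ 2 - (1 + beta%:C) * z + beta%:C) * v 0 j
     = z * ((u 0 j + ((1 + beta%:C) * v 0 j - ((1 + gamma) * alpha)%:C * q 0 j)) - z * v 0 j)
       + (((- beta%:C) * v 0 j + (gamma * alpha)%:C * q 0 j) - z * u 0 j).
    rewrite !rmorphM rmorphD rmorph1 /=. ring.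
  by apply/eqP; rewrite -subr_eq0 h e1 e2 !subrr mulr0 addr0.
Qed.

Lemma root_eig (l : R) z : eigenvalue Q l -> pc (bb alpha beta gamma l) (cc alpha beta gamma l) z = 0 ->
  eigenvalue (map_mx (fun x : R => x%:C) (momentum_matrix alpha beta gamma Q)) z.
Proof.
rewrite -(eigenvalue_map f) => /eigenvalueP [v hv vn0] hp.
move: hp; rewrite /pc /bb /cc ?rmorphM ?rmorphD ?rmorphB ?rmorph1 => hp.
apply/eigenvalueP.
set k := z - (1 + beta%:C) + (1 + gamma%:C) * alpha%:C * l%:C.
exists (row_mx (k *: v) v); last first.
  by apply: contraNneq vn0 => /eqP; rewrite -row_mx0 => /eqP /eq_row_mx [_ ->].
rewrite Ac_block mul_row_block scale_row_mx !mulmx0 mulmx1 add0r.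
rewrite mulmxDr mulmxBr !mul_mx_scalar -!scalemxAr hv.
congr row_mx.
- rewrite !scalerA -scalerDl; congr (_ *: v).
  rewrite ?rmorphM ?rmorphD ?rmorph1 /k.
  rewrite -[RHS]subr0 -hp. ring.
- rewrite !scalerA -scalerBl -scalerDl; congr (_ *: v).
  rewrite ?rmorphM ?rmorphD ?rmorph1 /k. ring.
Qed.

Lemma sym_real (mu : R[i]) (v : 'rV[R[i]]_n) : Q^T = Q -> v != 0 ->
  v *m Qc = mu *: v -> mu = (complex.Re mu)%:C.
Proof.
move=> hQ vn0 hv.
set vb := map_mx (@conjc R) v.
have hQc : Qc^T = Qc by rewrite map_trmx hQ.
have hcQ : map_mx (@conjc R) Qc = Qc by apply/matrixP => i j; rewrite !mxE conjc_real.
have hvb : vb *m Qc = (conjc mu) *: vb.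
  by rewrite /vb -hcQ -map_mxM hv map_mxZ.
have e1 : v *m Qc *m vb^T = mu *: (v *m vb^T) by rewrite hv -scalemxAl.
have e2 : v *m Qc *m vb^T = (conjc mu) *: (v *m vb^T).
  by rewrite -mulmxA -{1}hQc -trmx_mul hvb linearZ scalemxAr.
have hN : (v *m vb^T) 0 0 != 0.
  rewrite mxE; apply/negP => /eqP hs.
  have h0 : forall j, true -> v 0 j * (vb^T) j 0 = 0.
    apply: (psumr_eq0P _ hs) => j _; rewrite !mxE; exact: mulcJ_ge0.
  move/negP: vn0; apply; apply/eqP/rowP => j; rewrite mxE.
  move: (h0 j isT); rewrite !mxE => /eqP; rewrite mulf_eq0 conjc_eq0 orbb => /eqP //.
have : (mu - conjc mu) * (v *m vb^T) 0 0 = 0.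
  move: e1 e2 hN; set N := v *m vb^T; clearbody N => e1 e2 hN.
  have := congr1 (fun M : 'M[R[i]]_1 => M 0 0) (etrans (esym e1) e2).
  by rewrite /= !mxE => h; rewrite mulrBl h subrr.
move/eqP; rewrite mulf_eq0 (negbTE hN) orbF subr_eq0.
case: mu {hv hvb e1 e2} => a b /= /eqP [] hb.
congr Complex; lra.
Qed.

End M.

Lemma eig_root (R : realType) (n : nat) (m L alpha beta gamma : R) (Q : 'M[R]_n) (q : 'cV[R]_n) z :
  in_QmL m L Q q ->
  eigenvalue (map_mx (fun x : R => x%:C) (momentum_matrix alpha beta gamma Q)) z ->
  exists l, [/\ m <= l, l <= L & pc (bb alpha beta gamma l) (cc alpha beta gamma l) z = 0].
Proof.
case=> hQ _ [hL hLb] [hm hmb] /eig_split [v vn0 hv].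
set K := alpha%:C * (gamma%:C - (1 + gamma%:C) * z) in hv.
set P0 := z ^+ 2 - (1 + beta%:C) * z + beta%:C in hv.
have hpc : forall l : R, pc (bb alpha beta gamma l) (cc alpha beta gamma l) z = P0 - l%:C * K.
  move=> l; rewrite /pc /bb /cc /P0 /K ?rmorphM ?rmorphD ?rmorphB ?rmorph1; ring.
have [K0|Kn0] := eqVneq K 0.
- exists m; split => //; first exact: hmb.
  rewrite hpc K0 mulr0 subr0.
  case/boolP: [exists j, v 0 j != 0] => [/existsP [j hj] | /existsPn hall].
  + by move: (hv j); rewrite K0 mul0r => /esym/eqP; rewrite mulf_eq0 (negbTE hj) orbF => /eqP.
  + move/negP: vn0; case; apply/eqP/rowP => j; rewrite mxE.
    by move: (hall j); rewrite negbK => /eqP.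
- set mu := P0 / K.
  have hQv : v *m map_mx (real_complex R) Q = mu *: v.
    apply/rowP => j; rewrite [in RHS]mxE /mu mulrAC -(hv j); field.
    exact: Kn0.
  have hmu := @sym_real R n Q _ _ hQ vn0 hQv.
  have ea : eigenvalue Q (complex.Re mu).
    rewrite -(eigenvalue_map (real_complex R)); apply/eigenvalueP; exists v => //.
    by rewrite hQv; congr (_ *: _); exact: hmu.
  exists (complex.Re mu); split; [exact: hmb|exact: hLb|].
  by rewrite hpc -hmu /mu mulfVK // subrr.
Qed.

Local Close Scope complex_scope.

Theorem corollary1 (R : realType) (n : nat) (m L alpha beta gamma rho : R)
  (Q0 : 'M[R]_n) (q0 : 'cV[R]_n) :
  0 < m -> m <= L -> rho < 1 ->
  in_QmL m L Q0 q0 -> achieves_rate alpha beta gamma Q0 q0 rho ->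
  forall (Q : 'M[R]_n) (q : 'cV[R]_n),
    in_QmL m L Q q -> achieves_rate alpha beta gamma Q q rho.
Proof.
move=> hm hmL hr hQ0 hA0 Q q hQ z hz.
have [l [h1 h2 hp]] := @eig_root R n m L alpha beta gamma Q q z hQ hz.
apply: (goodB _ _ _ z _ hp).
case: hQ0 => _ _ [eL _] [em _].
apply: (good_conv _ _ _ _ m L) => //; apply: goodA => z' hz'; apply: hA0.
- exact: (@root_eig R n alpha beta gamma Q0 m z' em hz').
- exact: (@root_eig R n alpha beta gamma Q0 L z' eL hz').
Qed.
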